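(* Let $p$ be a prime, $k\ge1$, and $g\in{\rm AGL}(k,p)$, acting on $\mathbb F_p^k$, written as $g(x)=Ax+e$ with $A\in{\rm GL}(k,p)$ and $e\in\mathbb F_p^k$. Then $g$ is an imprimitive permutation of $\mathbb F_p^k$ if and only if the characteristic polynomial of $A$ is reducible over $\mathbb F_p$.
   Context: A permutation $g$ of a finite set $\Omega$ with $|\Omega|=n$ is called imprimitive if it preserves a partition of $\Omega$ into blocks of equal size $m$ with $1<m<n$ (equivalently, it lies in a transitive imprimitive subgroup of ${\rm Sym}(\Omega)$); otherwise it is primitive. *)

(* Defs.v *)
From mathcomp Require Import all_boot all_order all_algebra all_fingroup all_field.
Set Implicit Arguments. Unset Strict Implicit. Unset Printing Implicit Defensive.
Import GRing.Theory.
Local Open Scope ring_scope.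

Definition imprimitive (T : finType) (g : T -> T) : Prop :=
  exists (P : {set {set T}}) (m : nat),
    [/\ partition P [set: T],
        (1 < m < #|T|)%N,
        (forall B, B \in P -> #|B| = m) &
        (forall B, B \in P -> g @: B \in P)].

Definition affine_map (p k : nat) (A : 'M['F_p]_k) (e : 'cV['F_p]_k)
  : 'cV['F_p]_k -> 'cV['F_p]_k := fun x => A *m x + e.

(* Main.v *)
Require Import Defs.
From mathcomp Require Import all_boot all_order all_algebra all_fingroup all_field.
Set Implicit Arguments. Unset Strict Implicit. Unset Printing Implicit Defensive.
Import GRing.Theory.
Local Open Scope ring_scope.
From Stdlib Require Import Classical.

Lemma horner_mx0_or_unit (F : fieldType) (n : nat) (A : 'M[F]_n.+1) (q : {poly F}) :
  irreducible_poly (mxminpoly A) ->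
  horner_mx A q = 0 \/ horner_mx A q \in unitmx.
Proof.
move=> irr.
have [dvd|ndvd] := boolP (mxminpoly A %| q).
  left; rewrite -(divpK dvd) rmorphM /= mx_root_minpoly mulr0 //.
right; have : coprimep (mxminpoly A) q by rewrite irreducible_poly_coprime.
case/Bezout_eq1_coprimepP => [[u v]] /= /(congr1 (horner_mx A)).
rewrite rmorphD !rmorphM /= mx_root_minpoly mulr0 add0r rmorph1 => h.
have := @mulmx1_unit _ _ (horner_mx A v) (horner_mx A q).
by case=> //; rewrite -mulmxE h.
Qed.

Lemma mx_ext_col (R : comNzRingType) (n : nat) (M : 'M[R]_n) :
  (forall z : 'cV[R]_n, M *m z = z) -> M = 1%:M.
Proof.
move=> H; apply/matrixP => i j.
have := congr1 (fun v : 'cV_n => v i 0) (H (delta_mx j 0)).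
by rewrite -colE !mxE andbT.
Qed.

Lemma orbit_pow (F : finFieldType) (n : nat) (A : 'M[F]_n.+1) :
  A \in unitmx -> irreducible_poly (mxminpoly A) ->
  forall S : {set 'cV[F]_n.+1}, 0 \notin S ->
  (forall y, y \in S -> A *m y \in S) -> A ^+ #|S| = 1.
Proof.
move=> hA irr S S0 SA.
have injA : injective (fun y : 'cV[F]_n.+1 => A *m y).
  by move=> y z /= h; rewrite -(mulKmx hA y) h mulKmx.
pose s := perm injA.
have sE : forall j x, (s ^+ j)%g x = A ^+ j *m x.
  move=> j x; rewrite permX; elim: j => [|j IH]; first by rewrite expr0 mul1mx.
  by rewrite iterS IH permE exprS mulmxA mulmxE.
pose G := <[s]>%G.
have sS : s @: S = S.
  apply/eqP; rewrite eqEcard card_imset; last exact: perm_inj.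
  rewrite leqnn andbT; apply/subsetP => z /imsetP [y yS ->].
  by rewrite permE SA.
have acts : [acts G, on S | 'P].
  rewrite cycle_subG; apply/astabsP => x /=.
  rewrite -[aperm x s]/(s x).
  by rewrite -{1}sS (mem_imset _ _ perm_inj).
have stab : forall x, x \in S -> #|('C_G[x | 'P])%g| = 1%N.
  move=> x xS; suff /trivgP -> : ('C_G[x | 'P])%G \subset [1]%g by rewrite cards1.
  apply/subsetP => t; rewrite inE => /andP [/cycleP [j ->]].
  move/astab1P; rewrite /= -[aperm _ _]/((s ^+ j)%g x) sE => hx; rewrite inE.
  have := @horner_mx0_or_unit _ _ A ('X^j - 1) irr.
  rewrite rmorphB rmorphXn rmorph1 /= horner_mx_X.
  case=> [/eqP|hu].
    rewrite subr_eq0 => /eqP Aj; apply/eqP/permP => z.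
    by rewrite sE perm1 Aj mul1mx.
  have : (A ^+ j - 1) *m x = 0 by rewrite mulmxBl hx mul1mx subrr.
  move/(congr1 (mulmx (invmx (A ^+ j - 1)))); rewrite mulKmx // mulmx0 => x0.
  by rewrite -x0 xS in S0.
have dvd : (#|G| %| #|S|)%N.
  rewrite -(acts_sum_card_orbit acts).
  rewrite (eq_bigr (fun _ => #|G|)) ?sum_nat_const ?dvdn_mull //.
  move=> T /imsetP [x xS ->].
  by have := card_orbit_stab 'P G x; rewrite stab // muln1.
have : (s ^+ #|S|)%g = 1%g by apply/eqP; rewrite -cyclic.order_dvdn.
move=> h; apply: mx_ext_col => z.
by rewrite -sE h perm1.
Qed.

Lemma frobD_iter (R : comNzRingType) (p : nat) (hc : p \in [pchar R]) (a : nat) (x y : R) :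
  (x + y) ^+ (p ^ a) = x ^+ (p ^ a) + y ^+ (p ^ a).
Proof.
elim: a => [|a IH]; first by rewrite !expr1.
rewrite expnSr !exprM IH -!(pFrobenius_autE hc).
by rewrite pFrobenius_autD_comm //; apply: mulrC.
Qed.

Lemma Fp_iter (p : nat) (hp : prime p) (a : nat) (c : 'F_p) : c ^+ (p ^ a) = c.
Proof.
elim: a => [|a IH]; first by rewrite expr1.
by rewrite expnSr exprM IH; have := expf_card c; rewrite card_Fp.
Qed.

Lemma noFrob (p : nat) (hp : prime p) (h : {poly 'F_p}) (a : nat) : (0 < a)%N ->
  irreducible_poly h -> h \is monic -> (a < (size h).-1)%N ->
  ~~ (h %| 'X^(p ^ a) - 'X).
Proof.
move=> a0 irr mon lta; apply/negP => dvd.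
have hI : monic_irreducible_poly h by split.
pose Q := {poly %/ h with hI}.
have hc : p \in [pchar Q].
  by rewrite (pchar_qpoly h p) pchar_Fp.
have qX : ('qX : Q) ^+ (p ^ a) = 'qX.
  apply/eqP; rewrite -subr_eq0; apply/eqP.
  have -> : ('qX : Q) ^+ (p ^ a) - 'qX = in_qpoly h ('X^(p ^ a) - 'X).
    by rewrite rmorphB rmorphXn.
  apply: val_inj => /=; apply/eqP; rewrite (mk_monicE hI).
  by rewrite -[_ == 0]/(Pdiv.Ring.rdvdp _ _) -dvdpE.
have fix_all : forall y : Q, y ^+ (p ^ a) = y.
  move=> y.
  have -> : y = in_qpoly h (val y).
    apply: val_inj => /=; rewrite Pdiv.Ring.rmodp_small //.
    exact: size_mk_monic y.
  rewrite -[val y]coefK poly_def linear_sum /=.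
  elim/big_ind: _ => //.
  - rewrite expr0n; case: eqP => // /eqP; rewrite expn_eq0 => /andP[/eqP p0].
    by rewrite p0 in hp.
  - by move=> u v Hu Hv; rewrite frobD_iter // Hu Hv.
  move=> i _; rewrite linearZ /= rmorphXn /= exprZn Fp_iter //.
  by rewrite -exprM mulnC exprM qX.
pose P : {poly Q} := 'X^(p ^ a) - 'X.
have szP : size P = (p ^ a).+1.
  rewrite /P size_polyDl size_polyXn // size_polyN size_polyX ltnS.
  apply: (leq_trans (prime_gt1 hp)); rewrite -{1}(expn1 p) leq_pexp2l //; last exact: prime_gt0.
have := @max_poly_roots _ P (enum Q).
rewrite -size_poly_eq0 szP /= enum_uniq => /(_ isT).
have -> : all (root P) (enum Q).
  by apply/allP => y _; rewrite /root /P !hornerE fix_all subrr.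
move=> /(_ isT); rewrite -cardE card_qfpoly card_Fp // ltnS.
move=> /(_ isT); rewrite leq_exp2l ?prime_gt1 // leqNgt lta //.
Qed.

Lemma imprim_of_sub (p n : nat) (A : 'M['F_p]_n) (hA : A \in unitmx) (e : 'cV['F_p]_n)
  (W : {set 'cV['F_p]_n}) :
  0 \in W -> (forall x y, x \in W -> y \in W -> x - y \in W) ->
  (forall x, x \in W -> A *m x \in W) -> (1 < #|W| < #|'cV['F_p]_n|)%N ->
  imprimitive (affine_map A e).
Proof.
move=> W0 WB WA Wc.
have WN : forall x, x \in W -> - x \in W by move=> x xW; rewrite -sub0r WB.
have WD : forall x y, x \in W -> y \in W -> x + y \in W.
  by move=> x y xW yW; rewrite -[y]opprK WB // WN.
pose R := [rel x y : 'cV['F_p]_n | y - x \in W].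
have eqR : {in [set: 'cV['F_p]_n] & &, equivalence_rel R}.
  move=> x y z _ _ _ /=; rewrite subrr W0; split=> // yx.
  apply/idP/idP => h.
    by have := WB _ _ h yx; rewrite opprB addrA subrK.
  by have := WD _ _ h yx; rewrite addrA subrK.
pose cls x := [set y in [set: 'cV['F_p]_n] | R x y].
have clsE : forall x, cls x = [set x + w | w in W].
  move=> x; apply/setP => y; rewrite !inE /=; apply/idP/imsetP.
    by move=> h; exists (y - x) => //; rewrite addrC subrK.
  by case=> w wW ->; rewrite addrC addKr.
have ccard : forall x, #|cls x| = #|W|.
  by move=> x; rewrite clsE card_imset //; apply: addrI.
pose g := affine_map A e.
have ginj : injective g.
  move=> y z; rewrite /g /affine_map => /addIr h.
  by rewrite -(mulKmx hA y) h mulKmx.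
have gcls : forall x, g @: cls x = cls (g x).
  move=> x; apply/eqP; rewrite eqEcard card_imset // !ccard leqnn andbT.
  apply/subsetP => z /imsetP [y]; rewrite !inE /= => yx ->.
  by rewrite /g /affine_map opprD addrACA subrr addr0 -mulmxN -mulmxDr WA.
exists (equivalence_partition R [set: 'cV['F_p]_n]), #|W|; split.
- exact: equivalence_partitionP.
- exact: Wc.
- by move=> B /imsetP [x _ ->]; apply: ccard.
- move=> B /imsetP [x _ ->]; rewrite -/(cls x) gcls.
  by apply/imsetP; exists (g x); rewrite ?inE.
Qed.

Lemma imprim_ker (p n : nat) (A M : 'M['F_p]_n) (hA : A \in unitmx) (e : 'cV['F_p]_n) :
  M *m A = A *m M -> M != 0 -> M \notin unitmx -> imprimitive (affine_map A e).
Proof.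
move=> cMA M0 Mu.
pose W := [set y : 'cV['F_p]_n | M *m y == 0].
apply: (@imprim_of_sub p n A hA e W).
- by rewrite inE mulmx0.
- by move=> x y; rewrite !inE mulmxBr => /eqP -> /eqP ->; rewrite subrr.
- by move=> x; rewrite !inE mulmxA cMA -mulmxA => /eqP ->; rewrite mulmx0.
apply/andP; split.
  pose K := kermx M^T.
  have K0 : K != 0 by rewrite kermx_eq0 row_free_unit unitmx_tr.
  have : [exists i, row i K != 0].
    case: (boolP [exists i, row i K != 0]) => // /existsPn H.
    move/negP: K0; case; apply/eqP/row_matrixP => i; rewrite row0.
    exact/eqP/negPn/H.
  case/existsP => i Ki; apply/card_gt1P; exists 0, (row i K)^T; split.
  - by rewrite inE mulmx0.
  - rewrite inE; rewrite -[M]trmxK -trmx_mul -row_mul mulmx_ker row0.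
    by rewrite trmx0.
  - by rewrite eq_sym; apply: contra Ki => /eqP h; rewrite -[row i K]trmxK h trmx0.
rewrite -cardsT; apply: proper_card; rewrite properT.
apply: contra M0 => /eqP WT; apply/eqP/matrixP => i j.
have : delta_mx j 0 \in W by rewrite WT inE.
rewrite inE => /eqP /(congr1 (fun v : 'cV_n => v i 0)).
by rewrite -colE !mxE.
Qed.

Lemma imprim_krylov (p n : nat) (hp : prime p) (A : 'M['F_p]_n.+1) (hA : A \in unitmx)
  (e : 'cV['F_p]_n.+1) :
  (size (mxminpoly A) < n.+2)%N -> imprimitive (affine_map A e).
Proof.
move=> szm.
set mu := mxminpoly A.
set d := (size mu).-1.
have mu0 : mu != 0 by rewrite monic_neq0 // mxminpoly_monic.
have szmu : (1 < size mu)%N by rewrite size_mxminpoly ltnS mxminpoly_nonconstant.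
pose v : 'cV['F_p]_n.+1 := delta_mx 0 0.
pose W := [set horner_mx A ((h : {poly 'F_p})) *m v | h : {poly_d 'F_p}].
apply: (@imprim_of_sub p n.+1 A hA e W).
- by apply/imsetP; exists 0 => //; rewrite /= rmorph0 mul0mx.
- move=> x y /imsetP [h1 _ ->] /imsetP [h2 _ ->].
  by apply/imsetP; exists (h1 - h2) => //=; rewrite rmorphB mulmxBl.
- move=> x /imsetP [h _ ->].
  have sz : (size (('X * (h : {poly 'F_p})) %% mu)%R <= d)%N.
    by rewrite /d -ltnS prednK ?ltn_modp // (ltn_trans _ szmu).
  apply/imsetP; exists (npolyp d (('X * (h : {poly 'F_p})) %% mu)) => //.
  rewrite (npolypK sz) mulmxA; congr (_ *m v).
  have -> : horner_mx A (('X * (h : {poly 'F_p})) %% mu) = horner_mx A ('X * (h : {poly 'F_p})).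
    by rewrite [in RHS](divp_eq ('X * (h : {poly 'F_p})) mu) rmorphD rmorphM /= mx_root_minpoly mulr0 add0r.
  by rewrite rmorphM /= horner_mx_X mulmxE.
apply/andP; split.
  apply/card_gt1P; exists 0, v; split.
  - by apply/imsetP; exists 0 => //; rewrite /= rmorph0 mul0mx.
  - apply/imsetP; exists (npolyp d 1) => //; rewrite npolypK ?rmorph1 ?mul1mx //.
    by rewrite size_poly1 /d -ltnS prednK // (ltn_trans _ szmu).
  - rewrite eq_sym; apply/eqP => /matrixP /(_ 0 0); rewrite !mxE /= => /eqP.
    by rewrite oner_eq0.
apply: (leq_ltn_trans (leq_imset_card _ _)).
rewrite card_npoly card_mx card_Fp // muln1 ltn_exp2l ?prime_gt1 //.
by rewrite /d -ltnS prednK // (ltn_trans _ szmu).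
Qed.
Theorem mainTheorem5 (p k : nat) (hp : prime p) (hk : (0 < k)%N)
  (A : 'M['F_p]_k) (hA : A \in unitmx) (e : 'cV['F_p]_k) :
  imprimitive (affine_map A e) <-> ~ irreducible_poly (char_poly A).
Proof.
case: k hk A hA e => // n _ A hA e.
set mu := mxminpoly A.
have mu0 : mu != 0 by rewrite monic_neq0 // mxminpoly_monic.
have szmu : (1 < size mu)%N by rewrite size_mxminpoly ltnS mxminpoly_nonconstant.
have dvd : mu %| char_poly A := mxminpoly_dvd_char A.
have ch0 : char_poly A != 0 by rewrite monic_neq0 // char_poly_monic.
have irr_eqp : mu %= char_poly A -> irreducible_poly mu -> irreducible_poly (char_poly A).
  move=> he [h1 h2]; split; first by rewrite -(eqp_size he).
  move=> q q1 qd; rewrite -(eqp_dvdr _ he) in qd.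
  exact: eqp_trans (h2 q q1 qd) he.
split.
- move=> [P [m [partP hm Pc Pg]]] irrc.
  have mueq : mu %= char_poly A.
    by apply: (apply_irredp irrc) => //; rewrite neq_ltn szmu orbT.
  have szm : size mu = n.+2 by rewrite (eqp_size mueq) size_char_poly.
  have irr : irreducible_poly mu.
    split => // q q1 qd.
    have qc : q %| char_poly A by rewrite -(eqp_dvdr _ mueq).
    by apply: eqp_trans (apply_irredp irrc q1 qc) _; rewrite eqp_sym.
  have cardT : #|'cV['F_p]_n.+1| = (m * #|P|)%N.
    rewrite -cardsT (card_partition partP) (eq_bigr (fun _ => m)) //.
    by rewrite sum_nat_const mulnC.
  have [a lea ma] : exists2 a, (a <= n.+1)%N & m = (p ^ a)%N.
    apply/(dvdn_pfactor _ _ hp).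
    by rewrite -[X in (_ %| p ^ X)%N]muln1 -(card_Fp hp) -card_mx cardT dvdn_mulr.
  move: hm; rewrite ma card_mx card_Fp // muln1 => /andP [h1 h2].
  have a0 : (0 < a)%N by case: a {lea ma} h1 h2.
  have an : (a < n.+1)%N by rewrite -(ltn_exp2l _ _ (prime_gt1 hp)).
  have Au : (A - 1) \in unitmx.
    have := @horner_mx0_or_unit _ _ A ('X - 1%:P) irr.
    case=> [/mxminpoly_min/(dvdp_leq (negbT (polyXsubC_eq0 1)))|].
      by rewrite -/mu szm size_XsubC ltnS leqNgt (leq_trans _ an).
    by rewrite rmorphB /= horner_mx_X horner_mx_C.
  pose g := affine_map A e.
  pose x0 := invmx (A - 1) *m (- e).
  have gx0 : g x0 = x0.
    apply/eqP; rewrite /g /affine_map -subr_eq0 addrAC -{2}[x0]mul1mx -mulmxBl.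
    by rewrite /x0 mulKVmx // addNr.
  have [covP trivP _] := and3P partP.
  have x0c : x0 \in cover P by rewrite (eqP covP) inE.
  pose B0 := pblock P x0.
  have B0P : B0 \in P by apply: pblock_mem.
  have x0B : x0 \in B0 by rewrite mem_pblock.
  have gB0 : g @: B0 = B0.
    have h : x0 \in g @: B0 by rewrite -{1}gx0; apply: imset_f.
    by rewrite -(def_pblock trivP (Pg _ B0P) h).
  pose S0 := [set y | x0 + y \in B0].
  have S0E : S0 = [set z - x0 | z in B0].
    apply/setP => y; rewrite inE; apply/idP/imsetP.
      by move=> h; exists (x0 + y) => //; rewrite addrC addKr.
    by case=> z zB ->; rewrite addrC subrK.
  have cS0 : #|S0| = m by rewrite S0E card_imset ?Pc //; apply: addIr.
  pose S := S0 :\ 0.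
  have cS : #|S| = m.-1.
    by rewrite -cS0 (cardsD1 0 S0) inE addr0 x0B.
  have S0n : 0 \notin S by rewrite !inE eqxx.
  have SA : forall y, y \in S -> A *m y \in S.
    move=> y; rewrite !inE => /andP [y0 yB]; apply/andP; split.
      apply: contra y0 => /eqP Ay.
      by rewrite -(mulKmx hA y) Ay mulmx0.
    rewrite -gB0; apply/imsetP; exists (x0 + y) => //.
    rewrite /g /affine_map mulmxDr -addrA [_ + e]addrC addrA.
    by rewrite -[A *m x0 + e]/(g x0) gx0.
  have Am := orbit_pow hA irr S0n SA.
  rewrite cS in Am.
  have hm : horner_mx A ('X^m - 'X) = 0.
    rewrite rmorphB rmorphXn /= horner_mx_X.
    have -> : m = (m.-1).+1 by rewrite prednK // ma expn_gt0 prime_gt0.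
    by rewrite exprS Am mulr1 subrr.
  have := noFrob hp a0 irr (mxminpoly_monic A).
  rewrite -/mu szm /= -ma (mxminpoly_min hm) => /(_ an).
  by [].
- move=> nirr.
  case: (classic (irreducible_poly mu)) => irr.
    apply: imprim_krylov => //.
    have := dvdp_leq ch0 dvd; rewrite size_char_poly leq_eqVlt.
    case/orP => // /eqP sz; exfalso; apply: nirr; apply: irr_eqp => //.
    by rewrite -dvdp_size_eqp // sz size_char_poly.
  have [q [q1 qd qn]] : exists q : {poly _}, [/\ size q != 1%N, q %| mu & ~~ (q %= mu)].
    apply: NNPP => H; apply: irr; split => // q q1 qd.
    apply/negPn/negP => qn; apply: H; exists q; split => //.
  have q0 : q != 0.
    by apply: contraNneq mu0 => q0; move: qd; rewrite q0 dvd0p.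
  pose r := mu %/ q.
  have mur : mu = r * q by rewrite divpK.
  have r0 : r != 0 by apply: contraNneq mu0 => r0; rewrite mur r0 mul0r.
  have szq : (1 < size q)%N.
    by rewrite ltn_neqAle eq_sym q1 /= lt0n size_poly_eq0.
  have szr : size mu = (size r + size q).-1 by rewrite mur size_mul.
  have qA0 : horner_mx A q != 0.
    apply/negP => /eqP /mxminpoly_min dq; move/negP: qn; apply.
    by rewrite /eqp qd dq.
  have rA0 : horner_mx A r != 0.
    apply/negP => /eqP /mxminpoly_min /(dvdp_leq r0); rewrite szr.
    by rewrite -subn1 leq_subLR [(1 + _)%N]addnC leq_add2l leqNgt szq.
  apply: (@imprim_ker p n.+1 A (horner_mx A q) hA e).
  - rewrite !mulmxE -[X in _ * X = _](horner_mx_X A) -[X in _ = X * _](horner_mx_X A).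
    by rewrite -!rmorphM mulrC.
  - exact: qA0.
  apply/negP => qu; move/negP: rA0; apply.
  have : horner_mx A r *m horner_mx A q = 0.
    by rewrite mulmxE -rmorphM /= -mur mx_root_minpoly.
  by move/(congr1 (mulmx^~ (invmx (horner_mx A q)))); rewrite mulmxK // mul0mx => ->.
Qed.
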